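(* Let $z \in G_D(\mathbb{Q})$ and suppose $z = \pm\zeta_{p_1}^{\pm \alpha_1} \cdots \zeta_{p_k}^{\pm \alpha_k}$, where $p_1,\dots,p_k$ are distinct odd primes with $\left(\frac{-D}{p_i}\right) = 1$ for all $i$ and $\alpha_i \ge 1$. If $z$ corresponds to the normalized triple $(a, b, c)$, i.e. $z = \frac{\pm a \pm b\sqrt{-D}}{c}$ with $a^2+Db^2=c^2$, $a,b,c\in\mathbb{N}$ and $\gcd(a,b,c)=1$, then $c = p_1^{\alpha_1} \cdots p_k^{\alpha_k}$.
   Context: Let $D>1$ be a square-free integer with $-D \equiv 2$ or $3 \pmod 4$, and assume the class group $C(-4D)$ of primitive positive-definite binary quadratic forms of discriminant $-4D$ is a free $\mathbb{Z}_2$-module, i.e. $C(-4D)\cong(\mathbb{Z}/2\mathbb{Z})^n$ for some $n\ge 0$. Let $G_D(\mathbb{Q}) := \{a + b\sqrt{-D} \in \mathbb{Q}[\sqrt{-D}] : a^2 + Db^2 = 1\}$, a group under multiplication. A solution $(a,b,c)$ with $a,b,c\in\mathbb{N}$ of $x^2+Dy^2=z^2$ is normalized if $\gcd(a,b,c)=1$. For each odd prime $q$ with Legendre symbol $\left(\frac{-D}{q}\right) = 1$, there exist unique positive integers $x_0, y_0$ with $\gcd(x_0,y_0)=1$ and $q^2 = x_0^2 + D y_0^2$; define $\zeta_q := \frac{x_0 + y_0\sqrt{-D}}{q} \in G_D(\mathbb{Q})$. *)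

(* Defs.v *)
From HB Require Import structures.
From mathcomp Require Import all_boot all_order all_algebra.
Set Implicit Arguments. Unset Strict Implicit. Unset Printing Implicit Defensive.
Import Order.TTheory GRing.Theory Num.Theory.
Local Open Scope ring_scope.

Definition squarefree (n : nat) : Prop :=
  forall p : nat, prime p -> ~ (p ^ 2 %| n)%N.

Definition legendre_negD_one (D q : nat) : Prop :=
  ~ (q %| D)%N /\ exists t : int, (t ^+ 2 = - (D%:Z) %[mod q%:Z])%Z.

(* the form (a,b,c) transformed by the integer matrix [[p, q], [r, s]]:
   g(x, y) = f(p x + q y, r x + s y) *)
Definition form_act (f : int * int * int) (p q r s : int) : int * int * int :=
  let: (a, b, c) := f in
  (a * p ^+ 2 + b * p * r + c * r ^+ 2,
   2 * a * p * q + b * (p * s + q * r) + 2 * c * r * s,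
   a * q ^+ 2 + b * q * s + c * s ^+ 2).

Definition proper_equiv (f g : int * int * int) : Prop :=
  exists p q r s : int, p * s - q * r = 1 /\ form_act f p q r s = g.

(* The form class group C(disc) of primitive positive-definite forms of
   discriminant disc is an elementary abelian 2-group (i.e. isomorphic to
   (Z/2Z)^n for some n): every class equals its inverse.  The inverse of
   the class of (a,b,c) is the class of (a,-b,c). *)
Definition class_group_elem2 (disc : int) : Prop :=
  forall a b c : int,
    0 < a -> b ^+ 2 - 4 * a * c = disc ->
    gcdz a (gcdz b c) = 1 ->
    proper_equiv (a, b, c) (a, - b, c).

(* An element a + b sqrt(-D) is represented by the pair (a, b). *)

Definition inGD (D : nat) (z : rat * rat) : Prop :=
  z.1 ^+ 2 + D%:R * z.2 ^+ 2 = 1.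

Definition gmul (D : nat) (u v : rat * rat) : rat * rat :=
  (u.1 * v.1 - D%:R * u.2 * v.2, u.1 * v.2 + u.2 * v.1).

Definition gone : rat * rat := (1, 0).

Definition ginv (u : rat * rat) : rat * rat := (u.1, - u.2).

Definition gpow (D : nat) (u : rat * rat) (e : int) : rat * rat :=
  match e with
  | Posz n => iter n (gmul D u) gone
  | Negz n => iter n.+1 (gmul D (ginv u)) gone
  end.

Definition zeta (q x0 y0 : nat) : rat * rat :=
  (x0%:R / q%:R, y0%:R / q%:R).

Definition zeta_data (D q x0 y0 : nat) : Prop :=
  (0 < x0)%N /\ (0 < y0)%N /\ coprime x0 y0 /\ (q ^ 2 = x0 ^ 2 + D * y0 ^ 2)%N.

(* Main.v *)
Require Import Defs.
From HB Require Import structures.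
From mathcomp Require Import all_boot all_order all_algebra.
From mathcomp Require Import ring zify.
Import Order.TTheory GRing.Theory Num.Theory.
Local Open Scope ring_scope.

Definition imul (D : nat) (u v : int * int) : int * int :=
  (u.1 * v.1 - D%:Z * u.2 * v.2, u.1 * v.2 + u.2 * v.1).
Definition ione : int * int := (1, 0).
Definition emb (n : nat) (u : int * int) : rat * rat :=
  (u.1%:~R / n%:R, u.2%:~R / n%:R).

Lemma gmul_emb D m n u v : (0 < m)%N -> (0 < n)%N ->
  gmul D (emb m u) (emb n v) = emb (m * n) (imul D u v).
Proof.
move=> hm hn; rewrite /gmul /emb /imul /=.
have hm' : (m%:R : rat) != 0 by rewrite pnatr_eq0 -lt0n.
have hn' : (n%:R : rat) != 0 by rewrite pnatr_eq0 -lt0n.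
congr (_, _); rewrite natrM !(rmorphB, rmorphD, rmorphM) /=; field; apply/andP; split => //.
Qed.

Lemma zeta_emb p x y : zeta p x y = emb p (x%:Z, y%:Z).
Proof. by []. Qed.

Lemma ginv_emb p x y : ginv (zeta p x y) = emb p (x%:Z, - y%:Z).
Proof. by rewrite /ginv /zeta /emb /= rmorphN mulNr. Qed.

Definition piz (x y : nat) (e : int) : int * int :=
  if e is Posz _ then (x%:Z, y%:Z) else (x%:Z, - y%:Z).

Definition Bz D x y (e : int) := iter `|e|%N (imul D (piz x y e)) ione.

Lemma gpow_emb D p x y e : (0 < p)%N ->
  gpow D (zeta p x y) e = emb (p ^ `|e|) (Bz D x y e).
Proof.
move=> hp; rewrite /Bz.
have key : forall (u : int * int) n, gmul D (emb p u) =1 (fun w => w) ->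
   True by [].
case: e => n /=.
- elim: n => [|n IH]; first by rewrite /emb /gone /= !divr1.
  by rewrite /= IH zeta_emb gmul_emb ?expn_gt0 ?hp // -expnS.
- elim: n => [|n IH].
    rewrite /= ginv_emb /gone.
    have -> : ((1%Q, 0%Q) : rat * rat) = emb 1 ione by rewrite /emb /= !divr1.
    by rewrite gmul_emb // muln1.
  by rewrite [iter _ _ _]/= IH ginv_emb gmul_emb ?expn_gt0 ?hp // -expnS.
Qed.
Lemma big_emb D k (p x y : 'I_k -> nat) (e : 'I_k -> int) :
  (forall i, 0 < p i)%N ->
  \big[gmul D/gone]_(i < k) gpow D (zeta (p i) (x i) (y i)) (e i) =
  emb (\prod_(i < k) p i ^ `|e i|)%N (\big[imul D/ione]_(i < k) Bz D (x i) (y i) (e i)).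
Proof.
move=> hp.
pose K := fun w P N => w = emb N P /\ (0 < N)%N.
suff [] : K (\big[gmul D/gone]_(i < k) gpow D (zeta (p i) (x i) (y i)) (e i))
   (\big[imul D/ione]_(i < k) Bz D (x i) (y i) (e i)) (\prod_(i < k) p i ^ `|e i|)%N by [].
apply: (big_rec3 K).
  by split => //; rewrite /emb /gone /= !divr1.
move=> i w P N _ [-> hN]; split; last by rewrite muln_gt0 expn_gt0 hp.
by rewrite gpow_emb // gmul_emb // expn_gt0 hp.
Qed.

Section Phi.
Variables (F : comNzRingType) (D : nat) (t : F).
Hypothesis ht : t ^+ 2 = - D%:R.
Definition phi (u : int * int) : F := u.1%:~R + u.2%:~R * t.

Lemma phi_mul u v : phi (imul D u v) = phi u * phi v.
Proof.
rewrite /phi /imul /= !(rmorphB, rmorphD, rmorphM) /=.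
have -> : ((D%:Z)%:~R : F) = - t ^+ 2 by rewrite ht opprK.
ring.
Qed.

Lemma phi_one : phi ione = 1.
Proof. by rewrite /phi /= mul0r addr0. Qed.

Lemma phi_iter a n : phi (iter n (imul D a) ione) = phi a ^+ n.
Proof. elim: n => [|n IH] /=; first exact: phi_one. by rewrite phi_mul IH exprS. Qed.

Lemma phi_big k (B : 'I_k -> int * int) :
  phi (\big[imul D/ione]_(i < k) B i) = \prod_(i < k) phi (B i).
Proof. exact: (big_morph phi phi_mul phi_one). Qed.

Lemma phi_conj u : phi u * phi (u.1, - u.2) = (u.1 ^+ 2 + D%:Z * u.2 ^+ 2)%:~R.
Proof.
rewrite -phi_mul /phi /imul /=.
have -> : u.1 * - u.2 + u.2 * u.1 = 0 by ring.
by rewrite mul0r addr0; congr (_%:~R); ring.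
Qed.
End Phi.
Local Close Scope ring_scope.
Lemma final_nat (a b c N A B : nat) : 0 < c -> 0 < N -> gcdn a (gcdn b c) = 1 ->
  a * N = A * c -> b * N = B * c ->
  (forall l, prime l -> l %| N -> ~~ ((l %| A) && (l %| B))) -> c = N.
Proof.
move=> hc hN hg hA hB hl.
have h1 : c %| N.
  have <- : gcdn (a*N) (gcdn (b*N) (c*N)) = N by rewrite -!muln_gcdl hg mul1n.
  by rewrite hA hB !dvdn_gcd (dvdn_mull _ (dvdnn c)) (dvdn_mull _ (dvdnn c)) (dvdn_mulr _ (dvdnn c)).
have hg1 : gcdn A (gcdn B N) = 1.
  have gpos : 0 < gcdn A (gcdn B N) by rewrite !gcdn_gt0 hN orbT orbT.
  case: (leqP (gcdn A (gcdn B N)) 1) => [hle|hlt].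
    by apply/eqP; rewrite eqn_leq hle gpos.
  have pr := pdiv_prime hlt.
  have hd := pdiv_dvd (gcdn A (gcdn B N)).
  have dA : pdiv (gcdn A (gcdn B N)) %| A := dvdn_trans hd (dvdn_gcdl _ _).
  have dB : pdiv (gcdn A (gcdn B N)) %| B := dvdn_trans hd (dvdn_trans (dvdn_gcdr _ _) (dvdn_gcdl _ _)).
  have dN : pdiv (gcdn A (gcdn B N)) %| N := dvdn_trans hd (dvdn_trans (dvdn_gcdr _ _) (dvdn_gcdr _ _)).
  by move: (hl _ pr dN); rewrite dA dB.
have h2 : N %| c.
  have <- : gcdn (A*c) (gcdn (B*c) (N*c)) = c by rewrite -!muln_gcdl hg1 mul1n.
  by rewrite -hA -hB !dvdn_gcd (dvdn_mull _ (dvdnn N)) (dvdn_mull _ (dvdnn N)) (dvdn_mulr _ (dvdnn N)).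
by apply/eqP; rewrite eqn_dvd h1 h2.
Qed.
Local Open Scope ring_scope.
Lemma zd_ndvd D q X Y : prime q -> ~ (q %| D)%N -> zeta_data D q X Y ->
  ~~ (q %| X)%N /\ ~~ (q %| Y)%N.
Proof.
move=> pq nD [hX [hY [cop heq]]].
have h12 : ~~ ((q %| X) && (q %| Y))%N.
  apply/negP => /andP [a b].
  have : (q %| gcdn X Y)%N by rewrite dvdn_gcd a b.
  by rewrite (eqP cop) dvdn1 => /eqP q1; rewrite q1 in pq.
have qq : (q %| q ^ 2)%N := dvdn_exp (isT : (0 < 2)%N) (dvdnn q).
have nY : ~~ (q %| Y)%N.
  apply/negP => dY; move/negP: h12; apply; rewrite dY andbT.
  have : (q %| X ^ 2 + D * Y ^ 2)%N by rewrite -heq.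
  rewrite (dvdn_addl _ (dvdn_mull D (dvdn_exp (isT : (0 < 2)%N) dY))).
  by rewrite Euclid_dvdX // => /andP[].
split => //.
apply/negP => dX.
have : (q %| X ^ 2 + D * Y ^ 2)%N by rewrite -heq.
rewrite (dvdn_addr _ (dvdn_exp (isT : (0 < 2)%N) dX)).
rewrite Euclid_dvdM // Euclid_dvdX // andbT => /orP [//|dY]; by rewrite dY in nY.
Qed.

Lemma Posz_intr (F : nzRingType) (m : nat) : ((Posz m)%:~R : F) = m%:R.
Proof. by []. Qed.

Lemma piz_norm D (q X Y : nat) (e : int) : zeta_data D q X Y ->
  ((piz X Y e).1 ^+ 2 + D%:Z * (piz X Y e).2 ^+ 2) = (q ^ 2)%N%:Z.
Proof.
move=> [_ [_ [_ heq]]]; rewrite heq.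
case: e => n /=; rewrite ?sqrrN; lia.
Qed.

Lemma key D k (p x y : 'I_k -> nat) (e : 'I_k -> int) (j : 'I_k) :
  injective p -> (forall i, prime (p i)) -> odd (p j) -> ~ (p j %| D)%N ->
  (forall i, zeta_data D (p i) (x i) (y i)) ->
  ~~ ((p j %| `|(\big[imul D/ione]_(i<k) Bz D (x i) (y i) (e i)).1|) &&
      (p j %| `|(\big[imul D/ione]_(i<k) Bz D (x i) (y i) (e i)).2|))%N.
Proof.
move=> pinj ppr podd nD hz.
set P := \big[imul D/ione]_(i<k) _.
have prq := ppr j.
have hch := pchar_Fp prq.
have [nX nY] := zd_ndvd _ _ _ _ prq nD (hz j).
have cast0 : forall n, ((n%:R : 'F_(p j)) == 0) = (p j %| n)%N.
  by move=> n; rewrite (dvdn_pcharf hch).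
have Y0 : (y j)%:R != 0 :> 'F_(p j) by rewrite cast0.
have X0 : (x j)%:R != 0 :> 'F_(p j) by rewrite cast0.
have hXY : ((x j)%:R : 'F_(p j)) ^+ 2 = - D%:R * (y j)%:R ^+ 2.
  have : ((p j ^ 2)%N%:R : 'F_(p j)) == 0.
    by rewrite cast0 (dvdn_exp (isT : (0 < 2)%N) (dvdnn _)).
  rewrite (hz j).2.2.2 natrD natrM !natrX addr_eq0 => /eqP ->.
  by rewrite mulNr.
pose sg : 'F_(p j) := if e j is Posz _ then 1 else -1.
pose t := sg * ((x j)%:R / (y j)%:R).
have sg2 : sg ^+ 2 = 1 by rewrite /sg; case: (e j) => _; rewrite ?sqrrN expr1n.
have ht : t ^+ 2 = - D%:R.
  rewrite /t exprMn sg2 mul1r expr_div_n hXY; field; exact: Y0.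
have nz : phi _ t P != 0.
  rewrite /P (phi_big _ _ _ ht); apply/prodf_neq0 => i _; rewrite /Bz (phi_iter _ _ _ ht).
  apply: expf_neq0.
  case: (eqVneq i j) => [->|ne].
    have two : (2%:R : 'F_(p j)) != 0.
      rewrite cast0; apply/negP => d2.
      have := d2; rewrite dvdn_prime2 // => /eqP e2.
      by rewrite e2 in podd.
    have -> : phi _ t (piz (x j) (y j) (e j)) = 2%:R * (x j)%:R.
      rewrite /phi /t /sg /piz; case: (e j) => n /=; rewrite ?rmorphN !Posz_intr;
      field; exact: Y0.
    exact: mulf_neq0.
  have := phi_conj _ _ _ ht (piz (x i) (y i) (e i)); rewrite (piz_norm _ _ _ _ _ (hz i)) Posz_intr.
  move=> h; apply/negP => /eqP h0; move: h; rewrite h0 mul0r => /esym/eqP.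
  rewrite cast0 Euclid_dvdX // andbT dvdn_prime2 // => /eqP /pinj ij.
  by rewrite ij eqxx in ne.
apply/negP => /andP [d1 d2]; move: nz.
have e1 : (P.1%:~R : 'F_(p j)) = 0 by apply/eqP; rewrite -(dvdz_pcharf hch).
have e2 : (P.2%:~R : 'F_(p j)) = 0 by apply/eqP; rewrite -(dvdz_pcharf hch).
by rewrite /phi e1 e2 mul0r addr0 eqxx.
Qed.

Theorem theorem3p8
  (D : nat)
  (hD1 : (1 < D)%N)
  (hDsf : squarefree D)
  (hDmod : (D %% 4 = 1)%N \/ (D %% 4 = 2)%N)
  (hcl : class_group_elem2 (- 4 * D%:Z))
  (k : nat) (p : 'I_k -> nat) (x0 y0 : 'I_k -> nat) (e : 'I_k -> int)
  (s : rat)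
  (hp_inj : injective p)
  (hp_prime : forall i, prime (p i))
  (hp_odd : forall i, odd (p i))
  (hp_leg : forall i, legendre_negD_one D (p i))
  (hzeta : forall i, zeta_data D (p i) (x0 i) (y0 i))
  (he : forall i, e i != 0)
  (hs : s = 1 \/ s = -1)
  (z : rat * rat)
  (hzG : inGD D z)
  (hz : z = let w := \big[gmul D/gone]_(i < k) gpow D (zeta (p i) (x0 i) (y0 i)) (e i)
            in (s * w.1, s * w.2))
  (a b c : nat)
  (habc : (a ^ 2 + D * b ^ 2 = c ^ 2)%N)
  (hgcd : gcdn a (gcdn b c) = 1%N)
  (hza : z.1 = a%:R / c%:R \/ z.1 = - (a%:R / c%:R))
  (hzb : z.2 = b%:R / c%:R \/ z.2 = - (b%:R / c%:R)) :
  c = (\prod_(i < k) p i ^ `|e i|)%N.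
Proof.
have hp0 : forall i, (0 < p i)%N by move=> i; exact: prime_gt0.
rewrite big_emb // in hz.
set N := (\prod_(i<k) p i ^ `|e i|)%N in hz *.
set P := \big[imul D/ione]_(i<k) _ in hz.
have hN : (0 < N)%N by rewrite /N prodn_gt0 // => i; rewrite expn_gt0 hp0.
have hc : (0 < c)%N.
  rewrite lt0n; apply/eqP => c0; rewrite c0 in habc hgcd.
  have [a0 b0] : a = 0%N /\ b = 0%N by nia.
  by rewrite a0 b0 in hgcd.
have hs1 : `|s| = 1 by case: hs => ->; rewrite ?normrN normr1.
have hc' : (c%:R : rat) != 0 by rewrite pnatr_eq0 -lt0n.
have hN' : (N%:R : rat) != 0 by rewrite pnatr_eq0 -lt0n.
have conv : forall (m : nat) (u : rat) (U : int), (u = m%:R / c%:R \/ u = - (m%:R / c%:R)) ->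
    u = s * (U%:~R / N%:R) -> (m * N = `|U| * c)%N.
  move=> m u U hu huU.
  have h1 : `|u| = m%:R / c%:R.
    by case: hu => ->; rewrite ?normrN ger0_norm // divr_ge0 // ler0n.
  have h2 : `|u| = (`|U|%N)%:R / N%:R.
    by rewrite huU normrM hs1 mul1r normrM normfV (ger0_norm (ler0n _ _)) natr_absz intr_norm.
  have /eqP : m%:R / c%:R = (`|U|%N)%:R / N%:R :> rat by rewrite -h1 h2.
  by rewrite eqr_div // -!natrM eqr_nat => /eqP.
have hA : (a * N = `|P.1| * c)%N by apply: (conv a z.1 P.1 hza); rewrite hz.
have hB : (b * N = `|P.2| * c)%N by apply: (conv b z.2 P.2 hzb); rewrite hz.
apply: (final_nat _ _ _ _ _ _ hc hN hgcd hA hB).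
move=> l prl; rewrite /N (Euclid_dvd_prod _ _ _ prl) big_has => /hasP [j _].
rewrite Euclid_dvdX // => /andP [dj _].
have -> : l = p j by apply/eqP; rewrite -dvdn_prime2.
exact: key (hp_odd j) (hp_leg j).1 hzeta.
Qed.
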